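(* Let $\mathcal G$ be a strongly connected directed graph with no self loops, vertex set $\mathcal V=\{1,\dots,n\}$ and edge set $\mathcal E=\{1,\dots,m\}$. Let $B=S-D$ be its incidence matrix, let $Q=DB^\mathsf{T}$, and let $W$ and $Q^\ddagger$ be as in the context. Let $\omega^{\mathrm u}\in\mathbb{R}^n$ be constant. Consider the dynamics \[ \dot{\tilde\theta}(t)=\omega^{\mathrm u}+c(t),\qquad \tilde\beta(t)=B^\mathsf{T}\tilde\theta(t),\qquad y(t)=D\tilde\beta(t). \] Let $\mathcal T$ be an outward directed spanning tree with root $r$, and let $g_1,\dots,g_{n-1}$ be an ordering of its edges such that $g_a\prec g_b$ implies $a<b$. Let $k,k_2>0$. Let $0<t_1<\dots<t_n$ satisfy $t_{j+1}-t_j>|\tilde\beta_{g_j}(t_j)|/k_2$ for each $j$. For each $i\neq r$, let $j(i)$ be the unique index with $\mathrm{dst}(g_{j(i)})=i$. Let the control be \[ c_i(t)=\begin{cases} k\,y_i(t) & t<t_1,\\ k\,y_i(t_1)+k_2\,\mathrm{sign}\big(\tilde\beta_{g_{j(i)}}(t)\big) & i\neq r,\ t_{j(i)}\le t<t_{j(i)+1},\\ k\,y_i(t_1) & \text{otherwise.}\end{cases} \] Assume \[ \tilde\beta(t_1)=-k^{-1}B^\mathsf{T}Q^\ddagger\omega^{\mathrm u} \qquad\text{and}\qquad \omega^{\mathrm u}+k\,y(t_1)=W\omega^{\mathrm u}. \] Then for all $j=1,\dots,n-1$, \[ \tilde\beta(t_{j+1})=(I+B^\mathsf{T}DE^{g_j})\,\tilde\beta(t_j)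 \qquad\text{and}\qquad \tilde\beta_{g_j}(t_{j+1})=0. \]
   Context: The matrices $S,D\in\mathbb{R}^{n\times m}$ are defined by $S_{ie}=1$ if node $i$ is the source of edge $e$ and $0$ otherwise, and $D_{ie}=1$ if node $i$ is the destination of edge $e$ and $0$ otherwise. The vector $\mathbf{1}$ is the all-ones vector. The matrix $Q=DB^\mathsf{T}$ is an irreducible rate matrix. Let $z>0$ satisfy $z^\mathsf{T}Q=0$ and $\mathbf{1}^\mathsf{T}z=1$, and set $W=\mathbf{1}z^\mathsf{T}$. Write $Q=T\begin{bmatrix}0&0\\0&\Lambda\end{bmatrix}T^{-1}$, where $T$ is invertible with first column $\mathbf{1}$, the first row of $T^{-1}$ is $z^\mathsf{T}$, and $\Lambda$ is invertible. Define $Q^\ddagger=T\begin{bmatrix}0&0\\0&\Lambda^{-1}\end{bmatrix}T^{-1}$. An outward directed spanning tree with root $r$ is a set $\mathcal T$ of $n-1$ edges such that every vertex is reachable from $r$ by a directed path in $\mathcal T$, and each vertex other than $r$ is the destination of exactly one edge of $\mathcal T$. For $f,g\in\mathcal T$, $f\prec g$ means there is a directed walk of nonzero length in $\mathcal T$ from $\mathrm{dst}(f)$ to $\mathrm{dst}(g)$. $E^g\in\mathbb{R}^{m\times m}$ is zero except $E^g_{gg}=1$. The convention $\mathrm{sign}(0)=0$ is used. *)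

(* Defs.v *)
From HB Require Import structures.
From mathcomp Require Import all_boot all_order all_algebra.
From mathcomp Require Import boolp classical_sets reals topology normedtype derive.
Set Implicit Arguments. Unset Strict Implicit. Unset Printing Implicit Defensive.
Import Order.TTheory GRing.Theory Num.Theory.
Import numFieldNormedType.Exports.
Local Open Scope ring_scope.

Section Graph.
Variables (n m : nat) (src dst : 'I_m -> 'I_n).

Definition no_self_loops : Prop := forall e, src e != dst e.

Definition adj : rel 'I_n := fun i j => [exists e, (src e == i) && (dst e == j)].

Definition strongly_connected : Prop := forall i j, connect adj i j.

Definition tree_adj (T : {set 'I_m}) : rel 'I_n :=
  fun u v => [exists e in T, (src e == u) && (dst e == v)].

Definition outward_spanning_tree (T : {set 'I_m}) (r : 'I_n) : Prop :=
  [/\ #|T| = n.-1,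
      (forall v, connect (tree_adj T) r v) &
      (forall v, v != r -> #|[set e in T | dst e == v]| = 1)].

Definition tree_prec (T : {set 'I_m}) (f g : 'I_m) : bool :=
  [exists v, tree_adj T (dst f) v && connect (tree_adj T) v (dst g)].
End Graph.

Section Matrices.
Variables (R : nzRingType) (n m : nat) (src dst : 'I_m -> 'I_n).
Definition Smx : 'M[R]_(n, m) := \matrix_(i, e) (src e == i)%:R.
Definition Dmx : 'M[R]_(n, m) := \matrix_(i, e) (dst e == i)%:R.
Definition Bmx : 'M[R]_(n, m) := Smx - Dmx.
Definition Qmx : 'M[R]_n := Dmx *m Bmx^T.
End Matrices.

Definition Emx (R : nzRingType) (m : nat) (g : 'I_m) : 'M[R]_m := delta_mx g g.

Definition Wmx (R : nzRingType) (n : nat) (z : 'cV[R]_n) : 'M[R]_n :=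
  const_mx 1 *m z^T.

Definition is_Qddagger (R : fieldType) (p : nat) (z : 'cV[R]_(1 + p))
    (Q Qdd : 'M[R]_(1 + p)) : Prop :=
  exists (T : 'M[R]_(1 + p)) (L : 'M[R]_p),
    [/\ T \in unitmx, col ord0 T = const_mx 1, row ord0 (invmx T) = z^T,
        L \in unitmx &
        Q = T *m block_mx 0 0 0 L *m invmx T] /\
    Qdd = T *m block_mx 0 0 0 (invmx L) *m invmx T.

Section Dynamics.
Variables (R : realType) (p m : nat) (src dst : 'I_m -> 'I_p.+1).

Definition betat (theta : R -> 'cV[R]_p.+1) (s : R) : 'cV[R]_m :=
  (Bmx R src dst)^T *m theta s.
Definition yt (theta : R -> 'cV[R]_p.+1) (s : R) : 'cV[R]_p.+1 :=
  Dmx R dst *m betat theta s.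

(* times t_1 < ... < t_n are t ord0, ..., t ord_max; for j : 'I_p (paper index j+1)
   tj t j = t_{j+1} (paper), tnext t j = t_{j+2} (paper). *)
Definition tj (t : 'I_p.+1 -> R) (j : 'I_p) : R := t (widen_ord (leqnSn p) j).
Definition tnext (t : 'I_p.+1 -> R) (j : 'I_p) : R := t (lift ord0 j).

Definition control (k k2 : R) (r : 'I_p.+1) (g : 'I_p -> 'I_m)
    (t : 'I_p.+1 -> R) (theta : R -> 'cV[R]_p.+1) (s : R) : 'cV[R]_p.+1 :=
  \col_i
   (if s < t ord0 then k * yt theta s i ord0
    else match [pick j | dst (g j) == i] with
         | Some j =>
             if (i != r) && (tj t j <= s) && (s < tnext t j)
             then k * yt theta (t ord0) i ord0
                  + k2 * Num.sg (betat theta s (g j) ord0)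
             else k * yt theta (t ord0) i ord0
         | None => k * yt theta (t ord0) i ord0
         end).

(* theta solves  d/dt theta = omega + c(t)  for t > 0: theta is continuous,
   and differentiable with the prescribed derivative except at finitely many
   times (the right-hand side is discontinuous). *)
Definition solves (omega : 'cV[R]_p.+1) (c : R -> 'cV[R]_p.+1)
    (theta : R -> 'cV[R]_p.+1) : Prop :=
  (forall s : R, 0 < s -> forall i, {for s, continuous (fun u : R => theta u i ord0)}) /\
  exists F : seq R, forall s : R, 0 < s -> s \notin F -> forall i,
      is_derive s 1 (fun u => theta u i ord0) (omega i ord0 + c s i ord0).
End Dynamics.

(* Main.v *)
Require Import Defs.
From HB Require Import structures.
From mathcomp Require Import all_boot all_order all_algebra.
From mathcomp Require Import boolp classical_sets reals topology normedtype derive.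
From mathcomp Require Import zify ring lra.
Import Order.TTheory GRing.Theory Num.Theory.
Import numFieldNormedType.Exports.
Local Open Scope ring_scope.

Module Helpers.
Section A.
Local Open Scope classical_set_scope.
Local Open Scope ring_scope.
Variable R : realType.
Lemma cont_lin (c : R) (s : R) : {for s, continuous (fun u : R => c * u)}.
Proof. exact: (continuousM (@cst_continuous _ _ c s) (@cvg_id _ _)). Qed.

Lemma mono_nofin (h d : R -> R) (a b : R) : a <= b ->
  (forall s, a <= s <= b -> {for s, continuous h}) ->
  (forall s, a < s < b -> is_derive s 1 h (d s) /\ d s <= 0) ->
  h b <= h a.
Proof.
move=> ab hc hd.
case: (ltgtP a b) ab => // [altb|->] _; last by [].
have hd' : forall x, x \in `]a, b[ -> is_derive x 1 h (d x).
  by move=> x; rewrite in_itv /= => /hd [].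
have hc' : {within `[a, b], continuous h}.
  apply: continuous_in_subspaceT => x; rewrite inE /= in_itv /= => xab.
  exact: hc.
have [c cab E] := MVT altb hd' hc'.
move: cab; rewrite in_itv /= => /hd [_ dc].
rewrite -subr_le0 E; apply: mulr_le0_ge0 => //.
by rewrite subr_ge0 ltW.
Qed.

Lemma mono_fin (h d : R -> R) (F : seq R) (a b : R) : a <= b ->
  (forall s, a <= s <= b -> {for s, continuous h}) ->
  (forall s, a < s < b -> s \notin F -> is_derive s 1 h (d s) /\ d s <= 0) ->
  h b <= h a.
Proof.
move: {2}(size F) (leqnn (size F)) => N; elim: N F a b => [|N IH] F a b szF ab hc hd.
- case: F szF hd => // _ hd.
  by apply: (@mono_nofin h d a b ab hc) => s sab; apply: hd.
- case: (boolP (has (fun x => a < x < b) F)) => [/hasP [x xF /andP [ax xb]]|none].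
  + set F' := [seq y <- F | y != x].
    have szF' : (size F' <= N)%N.
      have H1 := count_predC (fun y => y != x) F.
      have H2 : (0 < count (predC (fun y => y != x)) F)%N.
        by rewrite -has_count; apply/hasP; exists x => //=; rewrite negbK.
      rewrite /F' size_filter; move: H1 H2 szF. set u := count _ F. set v := count _ F. move=> H1 H2 szF. by rewrite -ltnS (leq_trans _ szF) // -H1 -{1}(addn0 u) ltn_add2l H2.
    have notF s : s != x -> s \notin F' -> s \notin F.
      by move=> sx; rewrite mem_filter /= sx.
    have h1 : h b <= h x.
      apply: (IH F' x b szF' (ltW xb)).
      - move=> s /andP [xs sb]; apply: hc; rewrite sb andbT.
        exact: le_trans (ltW ax) xs.
      - move=> s /andP [xs sb] sF; apply: hd; last by apply: notF sF; rewrite gt_eqF.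
        by rewrite sb (lt_trans ax xs).
    have h2 : h x <= h a.
      apply: (IH F' a x szF' (ltW ax)).
      - move=> s /andP [xs sb]; apply: hc; rewrite xs /=.
        exact: le_trans sb (ltW xb).
      - move=> s /andP [xs sb] sF; apply: hd; last by apply: notF sF; rewrite lt_eqF.
        by rewrite xs (lt_trans sb xb).
    exact: le_trans h1 h2.
  + apply: (@mono_nofin h d a b ab hc) => s sab; apply: hd => //.
    by apply: contra none => sF; apply/hasP; exists s.
Qed.

Lemma lin_fin (h : R -> R) (c : R) (F : seq R) (a b : R) : a <= b ->
  (forall s, a <= s <= b -> {for s, continuous h}) ->
  (forall s, a < s < b -> s \notin F -> is_derive s 1 h c) ->
  h b = h a + c * (b - a).
Proof.
move=> ab hc hd.
have dl (s : R) : is_derive s 1 (fun u : R => c * u) c.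
  have := @is_deriveZ R R^o R^o id c s 1 1 (is_derive_id s 1).
  by rewrite /GRing.scale /= mulr1.
have H1 : h b - c * b <= h a - c * a.
  apply: (@mono_fin (fun u => h u - c * u) (fun _ => 0) F a b ab).
    by move=> s sab; apply: continuousB; [exact: hc | exact: cont_lin].
  move=> s sab sF; split => //.
  have := is_deriveB (hd s sab sF) (dl s); rewrite subrr; exact.
have H2 : c * b - h b <= c * a - h a.
  apply: (@mono_fin (fun u => c * u - h u) (fun _ => 0) F a b ab).
    by move=> s sab; apply: continuousB; [exact: cont_lin | exact: hc].
  move=> s sab sF; split => //.
  have := is_deriveB (dl s) (hd s sab sF); rewrite subrr; exact.
apply/eqP; rewrite eq_le; apply/andP; split.
  by move: H1; rewrite mulrBr; lra.
by move: H2; rewrite mulrBr; lra.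
Qed.

Lemma sign_pos (f : R -> R) (k2 : R) (F : seq R) (a b : R) : 0 < k2 -> a <= b ->
  (forall s, a <= s <= b -> {for s, continuous f}) ->
  (forall s, a < s < b -> s \notin F -> is_derive s 1 f (- (k2 * Num.sg (f s)))) ->
  f a < k2 * (b - a) ->
  (forall s, a <= s <= b -> f s != 0) -> 0 < f a -> False.
Proof.
move=> k2p ab fc fd fab fnz fa.
have pos s : a <= s <= b -> 0 < f s.
  move=> /andP [asl sb]; rewrite lt_neqAle eq_sym fnz ?asl ?sb //=.
  rewrite leNgt; apply/negP => fs.
  have [c cI fc0] : exists2 c, c \in `[a, s] & f c = 0.
    apply: IVT => //.
      apply: continuous_in_subspaceT => x; rewrite inE /= in_itv /= => /andP [ax xs].
      by apply: fc; rewrite ax (le_trans xs sb).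
    by rewrite ge_min le_max (ltW fs) (ltW fa) orbT.
  move: cI; rewrite in_itv /= => /andP [ac cs].
  by move: (fnz c); rewrite ac (le_trans cs sb) fc0 eqxx => /(_ isT).
have E : f b = f a + - k2 * (b - a).
  apply: (@lin_fin f (- k2) F a b ab fc) => s sab sF.
  have := fd s sab sF; case/andP: sab => asl sb.
  by rewrite gtr0_sg ?mulr1 // pos // (ltW asl) (ltW sb).
have : 0 < f b by apply: pos; rewrite ab lexx.
rewrite E; lra.
Qed.

Lemma sign_fin (f : R -> R) (k2 : R) (F : seq R) (a b : R) : 0 < k2 -> a <= b ->
  (forall s, a <= s <= b -> {for s, continuous f}) ->
  (forall s, a < s < b -> s \notin F -> is_derive s 1 f (- (k2 * Num.sg (f s)))) ->
  `|f a| < k2 * (b - a) -> f b = 0.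
Proof.
move=> k2p ab fc fd fab.
have sq s : a <= s <= b -> f b * f b <= f s * f s.
  case/andP=> asl sb.
  apply: (@mono_fin (fun u => f u * f u) (fun x => f x *: (- (k2 * Num.sg (f x))) + f x *: (- (k2 * Num.sg (f x)))) F s b sb).
    move=> x /andP [sx xb]; apply: continuousM; apply: fc; by rewrite (le_trans asl sx) xb.
  move=> x /andP [sx xb] xF; have xab : a < x < b by rewrite (le_lt_trans asl sx) xb.
  split; first by have := is_deriveM (fd x xab xF) (fd x xab xF).
  have : 0 <= `|f x| by [].
  rewrite normrEsg /GRing.scale /=; nra.
apply/eqP; apply: contraT => fb0.
have fnz s : a <= s <= b -> f s != 0.
  move=> sab; apply: contra fb0 => /eqP fs0.
  have := sq s sab; rewrite fs0 mulr0 => H.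
  have : 0 <= f b * f b by rewrite -expr2 sqr_ge0.
  move=> H2; have : f b * f b = 0 by apply/eqP; rewrite eq_le H H2.
  by move/eqP; rewrite mulf_eq0 orbb.
have fa0 : f a != 0 by apply: fnz; rewrite lexx ab.
case: (ltgtP (f a) 0) fa0 fab => [fan|fap|->]; last by [].
- move=> _ fab; apply: False_ind; apply: (@sign_pos (fun u => - f u) k2 F a b k2p ab).
  + by move=> s sab; apply: continuousN; apply: fc.
  + move=> s sab sF; have := is_deriveN (fd s sab sF).
    by rewrite sgrN mulrN.
  + by move: fab; rewrite ltr0_norm.
  + by move=> s sab; rewrite oppr_eq0 fnz.
  + by rewrite oppr_gt0.
- move=> _ fab; apply: False_ind; apply: (@sign_pos f k2 F a b k2p ab fc fd) => //.
  by move: fab; rewrite gtr0_norm.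
Qed.
End A.

Section B.
Set Implicit Arguments. Unset Strict Implicit. Unset Printing Implicit Defensive.
Local Open Scope classical_set_scope.
Local Open Scope ring_scope.
Lemma beta_entry (R : realType) (p m : nat) (src dst : 'I_m -> 'I_p.+1)
  (theta : R -> 'cV[R]_p.+1) s e :
  betat src dst theta s e ord0 = theta s (src e) ord0 - theta s (dst e) ord0.
Proof.
rewrite /betat mxE.
under eq_bigr => l _ do rewrite !mxE mulrBl.
rewrite sumrB (bigD1 (src e)) //= eqxx mul1r big1 ?addr0; last first.
  by move=> l /negPf; rewrite eq_sym => ->; rewrite mul0r.
rewrite (bigD1 (dst e)) //= eqxx mul1r big1 ?addr0 //.
by move=> l /negPf; rewrite eq_sym => ->; rewrite mul0r.
Qed.

Lemma tree_notr (p m : nat) (src dst : 'I_m -> 'I_p.+1) T r e :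
  outward_spanning_tree src dst T r -> e \in T -> dst e != r.
Proof.
case=> cT _ c1 eT; apply/negP => /eqP der.
have full : forall v, v \in dst @: T.
  move=> v.
  case: (eqVneq v r) => [->|vr]; first by rewrite -der imset_f.
  have := c1 v vr => /eqP; rewrite eqn_leq => /andP [_].
  rewrite card_gt0 => /set0Pn [x]; rewrite inE => /andP [xT /eqP <-].
  exact: imset_f.
have H1 : (#|'I_p.+1| <= #|dst @: T|)%N.
  by apply: subset_leq_card; apply/fintype.subsetP => v _; apply: full.
have := leq_imset_card dst T; rewrite cT /=.
move: H1; rewrite card_ord => H1 H2.
by have := leq_trans H1 H2; rewrite ltnn.
Qed.

Lemma tree_uniq (p m : nat) (src dst : 'I_m -> 'I_p.+1) T r e e' :
  outward_spanning_tree src dst T r -> e \in T -> e' \in T ->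
  dst e = dst e' -> e = e'.
Proof.
move=> ost eT e'T de.
have := tree_notr ost eT => der.
case: ost => _ _ /(_ _ der) /eqP /cards1P [x Hx].
have H1 : e \in [set e0 in T | dst e0 == dst e] by rewrite inE eT eqxx.
have H2 : e' \in [set e0 in T | dst e0 == dst e] by rewrite inE e'T de eqxx.
rewrite Hx in H1 H2.
by rewrite (set1P H1) (set1P H2).
Qed.

Lemma t_lt (R : realType) p (t : 'I_p.+1 -> R) :
  (forall j, tj t j < tnext t j) -> forall u v : 'I_p.+1, (u < v)%N -> t u < t v.
Proof.
move=> H.
pose tt x := t (inord x).
have step x : (x < p)%N -> tt x < tt x.+1.
  move=> xp; have := H (Ordinal xp); rewrite /tj /tnext /tt.
  have -> : widen_ord (leqnSn p) (Ordinal xp) = inord x.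
    by apply: val_inj; rewrite /= inordK // ltnS ltnW.
  have -> : lift ord0 (Ordinal xp) = inord x.+1.
    by apply: val_inj; rewrite /= inordK.
  by [].
have mono x y : (x < y)%N -> (y <= p)%N -> tt x < tt y.
  elim: y => // y IH; rewrite ltnS leq_eqVlt => /orP [/eqP ->|xy] yp.
    exact: step.
  by apply: lt_trans (IH xy (ltnW yp)) (step _ yp).
move=> u v uv; rewrite -(inord_val u) -(inord_val v).
by apply: mono; rewrite // -ltnS.
Qed.

Lemma t_le (R : realType) p (t : 'I_p.+1 -> R) :
  (forall j, tj t j < tnext t j) -> forall u v : 'I_p.+1, (u <= v)%N -> t u <= t v.
Proof.
move=> H u v; rewrite leq_eqVlt => /orP [/eqP uv|uv].
  by rewrite (val_inj uv).
exact/ltW/t_lt.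
Qed.

Lemma BDE (R : realType) (p m : nat) (src dst : 'I_m -> 'I_p.+1) (g0 : 'I_m)
  (v : 'cV[R]_m) e :
  ((Bmx R src dst)^T *m Dmx R dst *m Emx R g0 *m v) e ord0
  = ((src e == dst g0)%:R - (dst e == dst g0)%:R) * v g0 ord0.
Proof.
have Ev : Emx R g0 *m v = \col_x ((x == g0)%:R * v g0 ord0).
  apply/matrixP => x o; rewrite (ord1 o) !mxE (bigD1 g0) //= big1.
    by rewrite !mxE eqxx andbT addr0.
  by move=> y /negPf yg; rewrite !mxE yg andbF mul0r.
have DEv : Dmx R dst *m (Emx R g0 *m v) = \col_l ((dst g0 == l)%:R * v g0 ord0).
  apply/matrixP => l o; rewrite (ord1 o) Ev !mxE (bigD1 g0) //= big1.
    by rewrite !mxE eqxx mul1r addr0.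
  by move=> y /negPf yg; rewrite !mxE yg mul0r mulr0.
rewrite -!mulmxA DEv mxE.
under eq_bigr => l _ do rewrite !mxE mulrBl.
rewrite sumrB (bigD1 (src e)) //= eqxx mul1r big1 ?addr0; last first.
  by move=> l /negPf; rewrite eq_sym => ->; rewrite mul0r.
rewrite (bigD1 (dst e)) //= eqxx mul1r big1 ?addr0; last first.
  by move=> l /negPf; rewrite eq_sym => ->; rewrite mul0r.
by rewrite mulrBl (eq_sym (dst g0) (src e)) (eq_sym (dst g0) (dst e)).
Qed.
End B.
End Helpers.
Import Helpers.

Theorem lemma2 (R : realType) (p m : nat) (src dst : 'I_m -> 'I_p.+1)
  (z : 'cV[R]_p.+1) (Qdd : 'M[R]_p.+1) (omega : 'cV[R]_p.+1)
  (T : {set 'I_m}) (r : 'I_p.+1) (g : 'I_p -> 'I_m) (k k2 : R)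
  (t : 'I_p.+1 -> R) (theta : R -> 'cV[R]_p.+1) :
  no_self_loops src dst ->
  strongly_connected src dst ->
  (forall i, 0 < z i ord0) ->
  z^T *m Qmx R src dst = 0 ->
  const_mx 1 *m z = 1%:M ->
  is_Qddagger z (Qmx R src dst) Qdd ->
  outward_spanning_tree src dst T r ->
  injective g -> [set g a | a : 'I_p] = T ->
  (forall a b : 'I_p, tree_prec src dst T (g a) (g b) -> (a < b)%N) ->
  0 < k -> 0 < k2 ->
  0 < t ord0 ->
  (forall j, tj t j < tnext t j) ->
  (forall j, `|betat src dst theta (tj t j) (g j) ord0| / k2 < tnext t j - tj t j) ->
  solves omega (control src dst k k2 r g t theta) theta ->
  betat src dst theta (t ord0) = - k^-1 *: ((Bmx R src dst)^T *m Qdd *m omega) ->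
  omega + k *: yt src dst theta (t ord0) = Wmx z *m omega ->
  forall j : 'I_p,
    betat src dst theta (tnext t j)
      = (1%:M + (Bmx R src dst)^T *m Dmx R dst *m Emx R (g j))
          *m betat src dst theta (tj t j)
    /\ betat src dst theta (tnext t j) (g j) ord0 = 0.
Proof.
move=> nsl _ _ _ _ _ ost ginj gT _ kp k2p t0p tlt tgap [thc [F thd]] _ Hw j.
set a := tj t j; set b := tnext t j.
set i := dst (g j); set q := src (g j).
have ginT j' : g j' \in T by rewrite -gT; apply: imset_f.
have ir : i != r := tree_notr ost (ginT j).
have qi : q != i := nsl (g j).
have guniq j' : dst (g j') = i -> j' = j.
  by move=> dj; apply: ginj; apply: (tree_uniq ost) => //; apply: ginT.
have ab : a < b := tlt j.
have t0a : t ord0 <= a by apply: t_le => //; exact: leq0n.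
have a0 : 0 < a := lt_le_trans t0p t0a.
have disj j' s : j' != j -> a <= s < b -> ~~ ((tj t j' <= s) && (s < tnext t j')).
  move=> jj /andP [asl sb]; apply/negP => /andP [H1 H2].
  case: (ltngtP j' j) => [jlt|jgt|/val_inj E]; last by rewrite E eqxx in jj.
  - have : tnext t j' <= a by apply: t_le => //=; rewrite /bump /= add1n.
    by move=> H3; have := lt_le_trans H2 H3; rewrite ltNge asl.
  - have : b <= tj t j' by apply: t_le => //=; rewrite /bump /= add1n.
    by move=> H3; have := le_trans H3 H1; rewrite leNgt sb.
pose cc := (Wmx z *m omega) r ord0.
have ccE l : omega l ord0 + k * yt src dst theta (t ord0) l ord0 = cc.
  have := congr1 (fun M : 'cV[R]_p.+1 => M l ord0) Hw; rewrite /= !mxE => ->.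
  rewrite /cc mxE; apply: eq_bigr => x _; rewrite !mxE; congr (_ * _).
  by apply: eq_bigr => y _; rewrite !mxE.
pose fq s := theta s q ord0 - theta s i ord0.
have ctrl s l : a <= s < b -> control src dst k k2 r g t theta s l ord0
    = k * yt src dst theta (t ord0) l ord0 + (if l == i then k2 * Num.sg (fq s) else 0).
  move=> sab; rewrite /control mxE.
  have -> : (s < t ord0) = false.
    by apply/negbTE; rewrite -leNgt (le_trans t0a) //; case/andP: sab.
  case: pickP => [j' /eqP dj'|none].
  - case: (eqVneq l i) => [li|li].
    + have jj : j' = j by apply: guniq; rewrite dj' li.
      rewrite jj li ir /= -/a -/b.
      case/andP: sab => -> -> /=.
      by rewrite /fq beta_entry.
    + have jj : j' != j by apply/eqP => E; rewrite -dj' E eqxx in li.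
      by rewrite -andbA (negbTE (disj j' s jj sab)) andbF addr0.
  - case: (eqVneq l i) => [li|li]; last by rewrite addr0.
    by have := none j; rewrite /= -/i li eqxx.
have deriv s l : a < s < b -> s \notin F -> is_derive s 1 (fun u => theta u l ord0)
    (cc + (if l == i then k2 * Num.sg (fq s) else 0)).
  move=> sab sF.
  have s0 : 0 < s by case/andP: sab => H _; exact: lt_trans a0 H.
  have := thd s s0 sF l; rewrite ctrl ?addrA ?ccE //.
  by case/andP: sab => H1 H2; rewrite (ltW H1) H2.
have cont s l : a <= s <= b -> {for s, continuous (fun u => theta u l ord0)}.
  by move=> /andP [H _]; apply: thc; exact: lt_le_trans a0 H.
have other l : l != i -> theta b l ord0 = theta a l ord0 + cc * (b - a).
  move=> li; apply: (@lin_fin _ (fun u => theta u l ord0) cc F a b (ltW ab)); first by move=> s; exact: cont.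
  by move=> s sab sF; have := deriv s l sab sF; rewrite (negbTE li) addr0.
have fb : fq b = 0.
  apply: (@sign_fin _ fq k2 F a b k2p (ltW ab)).
  - by move=> s sab; apply: continuousB; apply: cont.
  - move=> s sab sF; have := is_deriveB (deriv s q sab sF) (deriv s i sab sF).
    rewrite (negbTE qi) eqxx addr0 opprD addrA subrr add0r; exact.
  - have := tgap j; rewrite -/a -/b beta_entry -/q -/i ltr_pdivrMr // mulrC; exact.
have thb l : theta b l ord0 = theta a l ord0 + cc * (b - a) + (l == i)%:R * fq a.
  case: (eqVneq l i) => [->|li]; last by rewrite other // mul0r addr0.
  have := other q qi; move: fb; rewrite /fq mul1r; lra.
split.
  apply/matrixP => e o; rewrite (ord1 o) beta_entry !thb mulmxDl mul1mx mxE BDE.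
  rewrite !beta_entry -/i -/q /fq; ring.
by rewrite beta_entry.
Qed.
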